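(* $\mathrm{Ndim}(\mathcal F_{\mathrm{aCORE}})\le4m+(8k+4)\log m+4\log(8e)=O(m+k\log m)$.
   Context: $\mathcal A=[m]$, $1\le k\le m$, $\mathcal A_k$ the set of $k$-subsets of $\mathcal A$, $\mathcal E=2^{\mathcal A}$. A profile is $P=(A_1,\dots,A_n)\in\mathcal E^n$, $n\ge1$. For $\alpha,\beta\ge0$, $\mathrm{CORE}_{(\alpha,\beta)}$ maps $P$ to the set of $W\in\mathcal A_k$ such that for every nonempty $W'\subseteq\mathcal A$, $|\{j\in[n]:|A_j\cap W'|>\alpha|A_j\cap W|\}|<\beta\frac{|W'|}{k}n$. $\mathcal F_{\mathrm{aCORE}}=\{\mathrm{CORE}_{(\alpha,\beta)}:\alpha,\beta\ge0\}$. Natarajan dimension: a finite set $\mathcal P$ of profiles is shattered by $\mathcal F$ if there are $f^0,f^1$ with $f^0(P)\ne f^1(P)$ on $\mathcal P$ such that for every $B\subseteq\mathcal P$ some $f\in\mathcal F$ equals $f^0$ on $B$ and $f^1$ on $\mathcal P\setminus B$; $\mathrm{Ndim}$ is the largest size of a shattered set. Logarithms are base 2. *)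

(* Defs.v *)
From mathcomp Require Import all_boot.
From Stdlib Require Import Reals.
Set Implicit Arguments. Unset Strict Implicit. Unset Printing Implicit Defensive.

(* A profile (A_1,...,A_n) is a sequence of approval sets; n = size P. *)
Definition profile (m : nat) := seq {set 'I_m}.

Definition Rltb (x y : R) : bool := if Rlt_dec x y then true else false.

Definition nblock (m : nat) (alpha : R) (P : profile m) (W W' : {set 'I_m}) : nat :=
  count (fun Aj => Rltb (alpha * INR #|Aj :&: W|)%R (INR #|Aj :&: W'|)) P.

Definition CORE (m k : nat) (alpha beta : R) (P : profile m) : {set {set 'I_m}} :=
  [set W : {set 'I_m} | (#|W| == k) &&
     [forall W' : {set 'I_m}, (W' != set0) ==>
        Rltb (INR (nblock alpha P W W'))
             (beta * (INR #|W'| / INR k) * INR (size P))%R]].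

(* Natarajan shattering of a finite set S of profiles (given as a duplicate-free
   list of profiles, each with n >= 1 voters) by F_aCORE = {CORE_(a,b) : a,b >= 0}. *)
Definition aCORE_shatters (m k : nat) (S : seq (profile m)) : Prop :=
  exists f0 f1 : profile m -> {set {set 'I_m}},
    (forall P, P \in S -> f0 P != f1 P) /\
    (forall B : pred (profile m),
       exists alpha beta : R, (0 <= alpha)%R /\ (0 <= beta)%R /\
         forall P, P \in S ->
           CORE k alpha beta P = if B P then f0 P else f1 P).

Definition log2 (x : R) : R := (ln x / ln 2)%R.

(* Main.v *)
Require Import Defs.
From mathcomp Require Import all_boot.
From Stdlib Require Import Reals Lra Lia.
From Stdlib Require Import ClassicalEpsilon.
From mathcomp Require Import zify.

Lemma RltbP (x y : R) : reflect (x < y)%R (Rltb x y).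
Proof. rewrite /Rltb; case: Rlt_dec => h; constructor => //. Qed.

Definition Aset (m : nat) (a : R) : {set 'I_m.+1 * 'I_m.+1} :=
  [set p : 'I_m.+1 * 'I_m.+1 | Rltb (a * INR p.1) (INR p.2)].

Lemma card_bound m (A : {set 'I_m}) : #|A| < m.+1.
Proof. by rewrite ltnS; apply: leq_trans (max_card _) _; rewrite card_ord. Qed.

Lemma nblock_Aset m (a a' : R) (P : profile m) W W' :
  Aset m a = Aset m a' -> nblock a P W W' = nblock a' P W W'.
Proof.
move=> hA; rewrite /nblock; apply: eq_count => Aj.
have e : forall b, Rltb (b * INR #|Aj :&: W|) (INR #|Aj :&: W'|) =
  ((inord #|Aj :&: W|, inord #|Aj :&: W'|) \in Aset m b).
  by move=> b; rewrite inE /= !inordK ?card_bound.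
by rewrite !e hA.
Qed.

Lemma CORE_Aset m k (a a' b : R) (P : profile m) :
  Aset m a = Aset m a' -> CORE k a b P = CORE k a' b P.
Proof.
move=> hA; apply/setP => W; rewrite !inE; congr (_ && _).
by apply: eq_forallb => W'; rewrite (nblock_Aset _ _ _ P W W' hA).
Qed.

Lemma Aset_mono m (a a' : R) : (0 <= a <= a')%R -> Aset m a' \subset Aset m a.
Proof.
move=> [h0 h1]; apply/subsetP => p; rewrite !inE => /RltbP h; apply/RltbP.
have := Rmult_le_compat_r (INR p.1) a a' (pos_INR _) h1 => h2; exact: (Rle_lt_trans _ _ _ h2 h).
Qed.

Lemma Aset_card m (a a' : R) : (0 <= a)%R -> (0 <= a')%R ->
  #|Aset m a| = #|Aset m a'| -> Aset m a = Aset m a'.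
Proof.
move=> h0 h1 hc; case: (Rle_or_lt a a') => h.
- have s := Aset_mono m _ _ (conj h0 h); apply/eqP; rewrite eq_sym eqEcard s /=.
  by rewrite hc.
- have s := Aset_mono m _ _ (conj h1 (Rlt_le _ _ h)); apply/eqP; rewrite eqEcard s /=.
  by rewrite hc.
Qed.

Lemma CORE_mono m k (a b b' : R) (P : profile m) : (1 <= k)%N ->
  (b <= b')%R -> CORE k a b P \subset CORE k a b' P.
Proof.
move=> hk hb; apply/subsetP => W; rewrite !inE => /andP [-> /forallP h] /=.
apply/forallP => W'; apply/implyP => hW; have := implyP (h W') hW.
move/RltbP => hl; apply/RltbP.
have hkp : (0 < INR k)%R by apply: lt_0_INR; apply/ltP.
have c0 : (0 <= INR #|W'| / INR k)%R.
  by apply: Rmult_le_pos; [apply: pos_INR | apply: Rlt_le; apply: Rinv_0_lt_compat].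
have := pos_INR (size P).
set c := (INR #|W'| / INR k)%R in hl c0 *; move=> hn.
apply: (Rlt_le_trans _ _ _ hl).
apply: Rmult_le_compat_r => //; apply: Rmult_le_compat_r => //.
Qed.

Lemma sum_eq_le (T : eqType) (s : seq T) (f g : T -> nat) :
  (forall x, x \in s -> f x <= g x) ->
  \sum_(x <- s) f x = \sum_(x <- s) g x -> forall x, x \in s -> f x = g x.
Proof.
elim: s => [|y s IH] // hle; rewrite !big_cons => he x.
have h1 : f y <= g y by apply: hle; rewrite mem_head.
have h2 : \sum_(x <- s) f x <= \sum_(x <- s) g x.
  by rewrite !big_seq; apply: leq_sum => z hz; apply: hle; rewrite inE hz orbT.
have e1 : f y = g y by lia.
have e2 : \sum_(x <- s) f x = \sum_(x <- s) g x by lia.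
rewrite inE => /orP [/eqP -> //|hx].
by apply: IH => // z hz; apply: hle; rewrite inE hz orbT.
Qed.
Arguments sum_eq_le [T s f g].

Lemma CORE_sum m k (a b b' : R) (S : seq (profile m)) : (1 <= k)%N ->
  \sum_(P <- S) #|CORE k a b P| = \sum_(P <- S) #|CORE k a b' P| ->
  forall P, P \in S -> CORE k a b P = CORE k a b' P.
Proof.
move=> hk he P hP; case: (Rle_or_lt b b') => h.
- have hs : forall Q, Q \in S -> #|CORE k a b Q| <= #|CORE k a b' Q|.
    by move=> Q _; apply: subset_leq_card; apply: CORE_mono.
  have hc := sum_eq_le hs he P hP.
  by apply/eqP; rewrite eqEcard CORE_mono //= -hc leqnn.
- have hs : forall Q, Q \in S -> #|CORE k a b' Q| <= #|CORE k a b Q|.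
    by move=> Q _; apply: subset_leq_card; apply: CORE_mono => //; lra.
  have hc := sum_eq_le hs (esym he) P hP.
  apply/eqP; rewrite eq_sym eqEcard CORE_mono //=; last by lra. by rewrite hc leqnn.
Qed.

Lemma nat_bound m s : expn 2 s <= (expn m.+1 2).+1 * (s * expn 2 m).+1 -> s <= 4 * m + 8.
Proof.
move=> h; rewrite leqNgt; apply/negP => hs.
have a1 : (expn m.+1 2).+1 <= expn 2 (m + 3).
  elim: m {h hs} => [|n IH] //.
  rewrite addSn (expnS 2); have -> : expn n.+2 2 = expn n.+1 2 + 2 * n + 3.
    by rewrite !expnS !expn0; lia.
  have : 2 * n + 3 <= expn 2 (n + 3).
    have := ltn_expl n (isT : 1 < 2); rewrite expnD (_ : expn 2 3 = 8) //; lia.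
  lia.
have a2 : (s * expn 2 m).+1 <= s.+1 * expn 2 m.
  by rewrite mulSn; have := expn_gt0 2 m; lia.
have a3 : expn 2 s <= expn 2 (m + 3) * (s.+1 * expn 2 m).
  by apply: leq_trans h _; apply: leq_mul.
set t := s - (2 * m + 3).
have hst : s = t + (2 * m + 3) by rewrite /t; lia.
have a4 : t.-1 < expn 2 t.-1 by apply: ltn_expl.
have a5 : expn 2 t = 2 * expn 2 t.-1.
  by rewrite -expnS prednK //; rewrite /t; lia.
have e1 : expn 2 s = expn 2 t * (expn 2 m * expn 2 m * expn 2 3).
  by rewrite hst mul2n -addnn !expnD; lia.
have e2 : expn 2 (m + 3) * (s.+1 * expn 2 m) = s.+1 * (expn 2 m * expn 2 m * expn 2 3).
  by rewrite expnD; lia.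
rewrite e1 e2 in a3.
have p : 0 < expn 2 m * expn 2 m * expn 2 3 by rewrite !muln_gt0 !expn_gt0.
have : expn 2 t <= s.+1.
  by rewrite -(leq_pmul2r p).
rewrite a5; lia.
Qed.

Theorem theorem12 (m k : nat) (hk1 : (1 <= k)%N) (hkm : (k <= m)%N)
  (S : seq (profile m)) (huniq : uniq S)
  (hn : forall P, P \in S -> (0 < size P)%N)
  (hsh : aCORE_shatters k S) :
  (INR (size S) <= 4 * INR m + (8 * INR k + 4) * log2 (INR m)
                   + 4 * log2 (8 * exp 1))%R.
Proof.
have Hs : (size S <= 4 * m + 8)%N.
  case: hsh => f0 [f1 [hf hB]].
  set s := size S.
  pose predB (B : {set 'I_s}) : pred (profile m) :=
    fun P => [exists i : 'I_s, (i \in B) && (nth [::] S i == P)].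
  have hc : forall B : {set 'I_s}, {ab : R * R | (0 <= ab.1)%R /\ (0 <= ab.2)%R /\
      forall P, P \in S -> CORE k ab.1 ab.2 P = if predB B P then f0 P else f1 P}.
    move=> B; apply: constructive_indefinite_description.
    have [a [b [ha [hb' H]]]] := hB (predB B); by exists (a, b).
  pose al B := (sval (hc B)).1.
  pose be B := (sval (hc B)).2.
  have sp : forall B, (0 <= al B)%R /\ (0 <= be B)%R /\
      forall P, P \in S -> CORE k (al B) (be B) P = if predB B P then f0 P else f1 P.
    by move=> B; exact: proj2_sig (hc B).
  pose c1 B := #|Aset m (al B)|.
  pose c2 B := \sum_(P <- S) #|CORE k (al B) (be B) P|.
  have b1 : forall B, c1 B < (expn m.+1 2).+1.
    move=> B; rewrite ltnS /c1; apply: leq_trans (max_card _) _.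
    by rewrite card_prod card_ord (expnS _ 1) expn1.
  have b2 : forall B, c2 B < (s * expn 2 m).+1.
    move=> B; rewrite ltnS /c2.
    have hb : forall P : profile m, #|CORE k (al B) (be B) P| <= expn 2 m.
      move=> P; apply: leq_trans (max_card _) _.
      by rewrite -cardsT -powersetT card_powerset cardsT card_ord.
    have h' : \sum_(P <- S) #|CORE k (al B) (be B) P| <= \sum_(P <- S) expn 2 m.
      by apply: leq_sum => P _; exact: hb P.
    apply: leq_trans h' _.
    by rewrite big_const_seq count_predT iter_addn_0 mulnC.
  pose F (B : {set 'I_s}) : 'I_(expn m.+1 2).+1 * 'I_(s * expn 2 m).+1 :=
    (inord (c1 B), inord (c2 B)).
  have hpred : forall B (i : 'I_s), predB B (nth [::] S i) = (i \in B).
    move=> B i; apply/existsP/idP => [[j /andP [hj /eqP e]]|hi]; last first.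
      by exists i; rewrite hi eqxx.
    have eji : j = i.
      apply: val_inj; apply/eqP.
      by rewrite -(nth_uniq [::] (ltn_ord j) (ltn_ord i) huniq) e.
    by rewrite -eji.
  have Finj : injective F.
    move=> B1 B2 [e1 e2].
    have {}e1 : c1 B1 = c1 B2.
      by have := congr1 val e1; rewrite /= !inordK.
    have {}e2 : c2 B1 = c2 B2.
      by have := congr1 val e2; rewrite /= !inordK.
    have [h1a [h1b h1c]] := sp B1.
    have [h2a [h2b h2c]] := sp B2.
    have eA := Aset_card _ _ _ h1a h2a e1.
    have eC : forall (b : R) (P : profile m), CORE k (al B2) b P = CORE k (al B1) b P.
      by move=> b P; apply: CORE_Aset; rewrite eA.
    have es : \sum_(P <- S) #|CORE k (al B1) (be B1) P| =
              \sum_(P <- S) #|CORE k (al B1) (be B2) P|.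
      by have := e2; rewrite /c2 => ->; apply: eq_bigr => P _; rewrite eC.
    have hC := CORE_sum _ _ _ _ _ _ hk1 es.
    apply/setP => i.
    have hP : nth [::] S i \in S by apply: mem_nth.
    have := hC _ hP; rewrite -(eC (be B2)) h1c // h2c // !hpred.
    have := hf _ hP.
    by case: (i \in B1); case: (i \in B2) => // /negP hne he; exfalso; apply: hne; rewrite he.
  have := leq_card F Finj.
  have -> : #|{: {set 'I_s}}| = expn 2 s.
    by rewrite -cardsT -powersetT card_powerset cardsT card_ord.
  rewrite card_prod !card_ord => h.
  exact: nat_bound h.
have hm : (1 <= m)%N by apply: leq_trans hkm.
have l2 : (0 < ln 2)%R by rewrite -ln_1; apply: ln_increasing; lra.
have lm : (0 <= log2 (INR m))%R.
  rewrite /log2 /Rdiv; apply: Rmult_le_pos; last by apply/Rlt_le/Rinv_0_lt_compat.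
  have h1 : (1 <= INR m)%R by apply: (le_INR 1 m); apply/leP.
  case: (Rle_lt_or_eq_dec _ _ h1) => h.
    by rewrite -ln_1; apply/Rlt_le/ln_increasing => //; lra.
  by rewrite -h ln_1; lra.
have l8 : (2 <= log2 (8 * exp 1))%R.
  have e1 : (2 < exp 1)%R by have := exp_ineq1 1 R1_neq_R0; lra.
  have : (ln (2*2) < ln (8 * exp 1))%R by apply: ln_increasing; lra.
  rewrite ln_mult; try lra; move=> hl.
  have q : ((ln 2 + ln 2) * / ln 2 = 2)%R by field; lra.
  rewrite /log2 /Rdiv.
  apply: (Rle_trans _ ((ln 2 + ln 2) * / ln 2)); first by rewrite q; lra.
  by apply: Rmult_le_compat_r; [apply/Rlt_le/Rinv_0_lt_compat; lra| lra].
have hS : (INR (size S) <= 4 * INR m + 8)%R.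
  have := le_INR _ _ (elimT leP Hs).
  change (4 * m + 8)%N with (Nat.add (Nat.mul 4 m) 8).
  rewrite plus_INR mult_INR.
  have -> : INR 4 = 4%R by simpl; lra.
  have -> : INR 8 = 8%R by simpl; lra.
  done.
have hk : (0 <= (8 * INR k + 4) * log2 (INR m))%R.
  by apply: Rmult_le_pos => //; have := pos_INR k; lra.
lra.
Qed.
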